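(* Let $\{x_i\}_{i\in[N]}$ be the global solution of the delayed consensus system described in the context, let $\beta>0$, and let \[ F(t):=d_x(t)+\beta\int_{\max\{0,t-2\tau\}}^t e^{-(t-s)}\int_s^t\max_{i\in[N]}|\dot x_i(r)|\,\mathrm dr\,\mathrm ds,\qquad t\ge0. \] Let $K$ be the smallest integer such that $K\sigma\ge2\tau$. Then \[ F(t)\le\mathcal{Z}^K_\sigma\Delta^0_x\qquad\text{for all }t\in[0,2\tau], \] where $\mathcal{Z}^K_\sigma:=Z^K_\sigma+Z^{K-1}_\sigma\beta\big(1-(1+2\tau)e^{-2\tau}\big)$.
   Context: Let $N\ge2$, $d\ge1$ be integers, $[N]=\{1,\dots,N\}$, $0\le\sigma\le\tau$. Let $\psi:[0,\infty)\to[0,\infty)$ be continuous, nonincreasing, positive everywhere, with $\sup\psi\le1$. Given $x_i^0\in C([-\tau,0],\mathbb{R}^d)$, $\{x_i\}$ is the global solution (continuous on $[-\tau,\infty)$, continuously differentiable on $[0,\infty)$) of $\dot x_i(t)=\sum_{j\ne i}a_{ij}(t)(x_j(t-\tau)-x_i(t-\sigma))$ for $t>0$, with $a_{ij}(t)=\frac1{N-1}\psi(|x_i(t-\sigma)-x_j(t-\tau)|)$, and $x_i=x_i^0$ on $[-\tau,0]$. $d_x(t):=\max_{i,j}|x_i(t)-x_j(t)|$; $\Delta^0_x:=\max_{i,j}\max_{s,t\in[-\tau,0]}|x_i^0(s)-x_j^0(t)|$. For $k\ge0$, \[ Z^k_\sigma:=\frac{1}{2\sqrt{\sigma(1+\sigma)}}\Big[\big((1+\sigma)+\sqrt{\sigma(1+\sigma)}\big)^{k+1}-\big((1+\sigma)-\sqrt{\sigma(1+\sigma)}\big)^{k+1}\Big],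 \] a polynomial in $\sigma$; equivalently $Z^0_\sigma=1$, $Z^k_\sigma=1+(1+\sigma)Z^{k-1}_\sigma+\sigma\sum_{m=0}^{k-1}Z^m_\sigma$ for $k\ge1$. *)

(* Defs.v *)
From Stdlib Require Import Reals List.
From Coquelicot Require Import Coquelicot.
Import ListNotations.
Open Scope R_scope.

(* Vectors of R^d are represented as functions nat -> R; only the
   components k = 0 .. d-1 are meaningful. *)
Definition sumR (l : list R) : R := fold_right Rplus 0 l.

Definition vnorm (d : nat) (v : nat -> R) : R :=
  sqrt (sumR (map (fun k => (v k) ^ 2) (seq 0 d))).

Definition vsub (v w : nat -> R) : nat -> R := fun k => v k - w k.

(* maximum of a list of nonnegative reals (base value 0) *)
Definition maxl (l : list R) : R := fold_right Rmax 0 l.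

Definition agents (N : nat) : list nat := seq 1 N.

(* A configuration: x i t k = k-th component of x_i(t) *)
Definition config := nat -> R -> nat -> R.

Definition diam (N d : nat) (x : config) (t : R) : R :=
  maxl (map (fun i => maxl (map (fun j => vnorm d (vsub (x i t) (x j t)))
                                 (agents N))) (agents N)).

Definition Delta0 (N d : nat) (tau : R) (x : config) : R :=
  real (Lub_Rbar (fun r => exists i j s t,
    (1 <= i <= N)%nat /\ (1 <= j <= N)%nat /\
    -tau <= s <= 0 /\ -tau <= t <= 0 /\
    r = vnorm d (vsub (x i s) (x j t)))).

Definition aw (N d : nat) (psi : R -> R) (sigma tau : R) (x : config)
  (i j : nat) (t : R) : R :=
  psi (vnorm d (vsub (x i (t - sigma)) (x j (t - tau)))) / INR (N - 1).

Definition rhs (N d : nat) (psi : R -> R) (sigma tau : R) (x : config)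
  (i : nat) (t : R) (k : nat) : R :=
  sumR (map (fun j => aw N d psi sigma tau x i j t *
                       (x j (t - tau) k - x i (t - sigma) k))
            (filter (fun j => negb (Nat.eqb j i)) (agents N))).

(* x is a global solution of the delayed consensus system:
   continuous on [-tau, oo), solves the ODE for t > 0 (initial datum is
   x itself restricted to [-tau,0]). *)
Definition is_solution (N d : nat) (psi : R -> R) (sigma tau : R)
  (x : config) : Prop :=
  (forall i k t, (1 <= i <= N)%nat -> (k < d)%nat -> -tau <= t ->
     filterlim (fun u => x i u k) (within (fun u => -tau <= u) (locally t))
               (locally (x i t k))) /\
  (forall i k t, (1 <= i <= N)%nat -> (k < d)%nat -> 0 < t ->
     is_derive (fun u => x i u k) t (rhs N d psi sigma tau x i t k)).

Definition psi_ok (psi : R -> R) : Prop :=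
  (forall r, 0 <= r -> filterlim psi (within (fun u => 0 <= u) (locally r))
                                  (locally (psi r))) /\
  (forall r s, 0 <= r -> r <= s -> psi s <= psi r) /\
  (forall r, 0 <= r -> 0 < psi r) /\
  (forall r, 0 <= r -> psi r <= 1).

Definition vel (x : config) (i : nat) (r : R) : nat -> R :=
  fun k => Derive (fun u => x i u k) r.

Definition Ffun (N d : nat) (beta tau : R) (x : config) (t : R) : R :=
  diam N d x t + beta *
    RInt (fun s => exp (- (t - s)) *
            RInt (fun r => maxl (map (fun i => vnorm d (vel x i r)) (agents N))) s t)
         (Rmax 0 (t - 2 * tau)) t.

(* Z^k_sigma via the recursion Z^0 = 1,
   Z^k = 1 + (1+sigma) Z^{k-1} + sigma * sum_{m=0}^{k-1} Z^m.
   Zpair sigma k = (Z^k, sum_{m=0}^k Z^m). *)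
Fixpoint Zpair (sigma : R) (k : nat) : R * R :=
  match k with
  | O => (1, 1)
  | S k' => let (z, s) := Zpair sigma k' in
            let z' := 1 + (1 + sigma) * z + sigma * s in (z', s + z')
  end.

Definition Zsig (sigma : R) (k : nat) : R := fst (Zpair sigma k).

(* Main.v *)
Require Import Defs.
From Stdlib Require Import Reals List Lia Lra Psatz.
From Coquelicot Require Import Coquelicot.
Import ListNotations.
Open Scope R_scope.

Definition sq (l : list nat) (v : nat -> R) := sumR (map (fun k => v k ^ 2) l).
Definition dot (l : list nat) (u v : nat -> R) := sumR (map (fun k => u k * v k) l).
Definition nrm (l : list nat) (v : nat -> R) := sqrt (sq l v).

Lemma sumR_ext (l : list nat) (f g : nat -> R) :
  (forall k, In k l -> f k = g k) -> sumR (map f l) = sumR (map g l).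
Proof. intros H; f_equal; apply map_ext_in; auto. Qed.

Lemma sumR_nonneg (l : list nat) (f : nat -> R) :
  (forall k, In k l -> 0 <= f k) -> 0 <= sumR (map f l).
Proof.
  induction l as [|a l IH]; simpl; intros H; [lra|].
  assert (0 <= f a) by auto. assert (0 <= sumR (map f l)) by auto. lra.
Qed.

Lemma sumR_le (l : list nat) (f g : nat -> R) :
  (forall k, In k l -> f k <= g k) -> sumR (map f l) <= sumR (map g l).
Proof.
  induction l as [|a l IH]; simpl; intros H; [lra|].
  assert (f a <= g a) by auto. assert (sumR (map f l) <= sumR (map g l)) by auto. lra.
Qed.

Lemma sumR_plus (l : list nat) (f g : nat -> R) :
  sumR (map (fun k => f k + g k) l) = sumR (map f l) + sumR (map g l).
Proof. induction l; simpl; lra. Qed.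

Lemma sumR_scal (l : list nat) (c : R) (f : nat -> R) :
  sumR (map (fun k => c * f k) l) = c * sumR (map f l).
Proof. induction l; simpl; [lra|]. rewrite IHl; lra. Qed.

Lemma sumR_zero_each (l : list nat) (f : nat -> R) :
  (forall k, In k l -> 0 <= f k) -> sumR (map f l) = 0 -> forall k, In k l -> f k = 0.
Proof.
  induction l as [|a l IH]; simpl; intros H0 H k Hk; [tauto|].
  assert (0 <= f a) by auto. assert (0 <= sumR (map f l)) by (apply sumR_nonneg; auto).
  destruct Hk as [<-|Hk]; [lra|]. apply IH; auto; lra.
Qed.

Lemma sq_nonneg l v : 0 <= sq l v.
Proof. apply sumR_nonneg; intros; apply pow2_ge_0. Qed.

Lemma nrm_nonneg l v : 0 <= nrm l v.
Proof. apply sqrt_pos. Qed.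

Lemma nrm_sq l v : nrm l v * nrm l v = sq l v.
Proof. apply sqrt_sqrt, sq_nonneg. Qed.

Lemma nrm_ext l u v : (forall k, In k l -> u k = v k) -> nrm l u = nrm l v.
Proof. intros H; unfold nrm, sq; f_equal; apply sumR_ext; intros k Hk; rewrite H; auto. Qed.

Lemma sq_zero l v : sq l v = 0 -> forall k, In k l -> v k = 0.
Proof.
  intros H k Hk. assert (v k ^ 2 = 0).
  { apply (sumR_zero_each l (fun k => v k ^ 2)); auto. intros; apply pow2_ge_0. }
  nra.
Qed.

Lemma CS l u v : dot l u v <= nrm l u * nrm l v.
Proof.
  set (A := nrm l u). set (B := nrm l v).
  assert (HA : 0 <= A) by apply nrm_nonneg. assert (HB : 0 <= B) by apply nrm_nonneg.
  assert (HA2 : A * A = sq l u) by apply nrm_sq. assert (HB2 : B * B = sq l v) by apply nrm_sq.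
  destruct (Req_dec A 0) as [A0|A0].
  { assert (Hu : forall k, In k l -> u k = 0) by (apply sq_zero; nra).
    unfold dot. rewrite (sumR_ext l _ (fun k => 0 * 0)).
    - rewrite sumR_scal. nra.
    - intros k Hk; rewrite Hu; auto; lra. }
  destruct (Req_dec B 0) as [B0|B0].
  { assert (Hv : forall k, In k l -> v k = 0) by (apply sq_zero; nra).
    unfold dot. rewrite (sumR_ext l _ (fun k => 0 * 0)).
    - rewrite sumR_scal. nra.
    - intros k Hk; rewrite Hv; auto; lra. }
  assert (H : 0 <= sumR (map (fun k => (u k * B - v k * A) ^ 2) l)).
  { apply sumR_nonneg; intros; apply pow2_ge_0. }
  rewrite (sumR_ext l _ (fun k => (B * B) * (u k ^ 2) + ((-2 * A * B) * (u k * v k) + (A * A) * (v k ^ 2)))) in H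
    by (intros; ring).
  rewrite sumR_plus, sumR_plus, !sumR_scal in H. fold (sq l u) (sq l v) in H.
  fold (dot l u v) in H. rewrite <- HA2, <- HB2 in H.
  assert (0 < A * B) by (apply Rmult_lt_0_compat; lra).
  nra.
Qed.

Lemma nrm_tri l u v : nrm l (fun k => u k + v k) <= nrm l u + nrm l v.
Proof.
  assert (Hs : sq l (fun k => u k + v k) = sq l u + 2 * dot l u v + sq l v).
  { unfold sq, dot. rewrite (sumR_ext l _ (fun k => u k ^ 2 + (2 * (u k * v k) + v k ^ 2))) by (intros; ring).
    rewrite !sumR_plus, sumR_scal. ring. }
  unfold nrm at 1. rewrite Hs.
  assert (H := CS l u v). rewrite <- (nrm_sq l u), <- (nrm_sq l v).
  assert (0 <= nrm l u) by apply nrm_nonneg. assert (0 <= nrm l v) by apply nrm_nonneg.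
  rewrite <- (sqrt_square (nrm l u + nrm l v)) by lra.
  apply sqrt_le_1_alt. nra.
Qed.

Lemma nrm_scal l c v : nrm l (fun k => c * v k) = Rabs c * nrm l v.
Proof.
  unfold nrm, sq. rewrite (sumR_ext l _ (fun k => (c * c) * v k ^ 2)) by (intros; ring).
  rewrite sumR_scal, sqrt_mult_alt by (apply Rle_0_sqr).
  fold (Rsqr c). rewrite sqrt_Rsqr_abs. reflexivity.
Qed.

Lemma nrm_zero l v : (forall k, In k l -> v k = 0) -> nrm l v = 0.
Proof.
  intros H. rewrite (nrm_ext l v (fun k => 0 * v k)).
  - rewrite nrm_scal, Rabs_R0; ring.
  - intros k Hk; rewrite H; auto; ring.
Qed.

Lemma vsub_tri l a b c : nrm l (vsub a c) <= nrm l (vsub a b) + nrm l (vsub b c).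
Proof.
  rewrite (nrm_ext l (vsub a c) (fun k => vsub a b k + vsub b c k)) by (intros; unfold vsub; ring).
  apply nrm_tri.
Qed.

Lemma vsub_sym l a b : nrm l (vsub a b) = nrm l (vsub b a).
Proof.
  rewrite (nrm_ext l (vsub a b) (fun k => -1 * vsub b a k)) by (intros; unfold vsub; ring).
  rewrite nrm_scal; replace (Rabs (-1)) with 1 by (rewrite Rabs_left; lra); ring.
Qed.

Lemma vsub_le l a b : nrm l (vsub a b) <= nrm l a + nrm l b.
Proof.
  rewrite (nrm_ext l (vsub a b) (fun k => a k + (-1 * b k))) by (intros; unfold vsub; ring).
  eapply Rle_trans; [apply nrm_tri|]. rewrite nrm_scal; replace (Rabs (-1)) with 1 by (rewrite Rabs_left; lra); lra.
Qed.

Lemma nrm_sum l (J : list nat) (w : nat -> R) (v : nat -> nat -> R) :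
  nrm l (fun k => sumR (map (fun j => w j * v j k) J)) <=
  sumR (map (fun j => Rabs (w j) * nrm l (v j)) J).
Proof.
  induction J as [|j J IH]; simpl.
  - rewrite nrm_zero; auto; lra.
  - eapply Rle_trans; [apply (nrm_tri l (fun k => w j * v j k)) |].
    rewrite nrm_scal. lra.
Qed.

Lemma sumR_le_len (J : list nat) (f : nat -> R) c :
  (forall j, In j J -> f j <= c) -> sumR (map f J) <= INR (length J) * c.
Proof.
  induction J as [|a J IH]; intros H; [simpl; lra|].
  change (sumR (map f (a :: J))) with (f a + sumR (map f J)).
  change (length (a :: J)) with (S (length J)).
  rewrite S_INR. assert (f a <= c) by (apply H; simpl; auto). assert (sumR (map f J) <= INR (length J) * c) by (apply IH; intros; apply H; simpl; auto).
  lra.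
Qed.

Lemma len_filter_neq (l : list nat) i :
  In i l -> (length (filter (fun j => negb (Nat.eqb j i)) l) <= length l - 1)%nat.
Proof.
  induction l as [|a l IH]; simpl; [tauto|]. intros H.
  destruct (Nat.eqb a i) eqn:E; simpl.
  - assert (length (filter (fun j => negb (Nat.eqb j i)) l) <= length l)%nat
      by (rewrite filter_length_le; auto). lia.
  - apply Nat.eqb_neq in E. destruct H as [H|H]; [congruence|].
    specialize (IH H). destruct l; simpl in *; [tauto|]. lia.
Qed.

Lemma vnorm_nrm d v : vnorm d v = nrm (seq 0 d) v.
Proof. reflexivity. Qed.

Lemma in_agents N j : In j (agents N) <-> (1 <= j <= N)%nat.
Proof. unfold agents; rewrite in_seq; lia. Qed.

Lemma speed N d psi sigma tau x i r B :
  (2 <= N)%nat -> psi_ok psi -> (1 <= i <= N)%nat -> 0 <= B ->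
  (forall j, (1 <= j <= N)%nat -> vnorm d (vsub (x j (r - tau)) (x i (r - sigma))) <= B) ->
  vnorm d (fun k => rhs N d psi sigma tau x i r k) <= B.
Proof.
  intros HN [_ [_ [Hpos Hle1]]] Hi HB Hj.
  set (J := filter (fun j => negb (Nat.eqb j i)) (agents N)).
  assert (HJ : forall j, In j J -> (1 <= j <= N)%nat).
  { intros j Hin. unfold J in Hin. apply filter_In in Hin. apply in_agents; tauto. }
  assert (HlenJ : (length J <= N - 1)%nat).
  { unfold J. eapply Nat.le_trans; [apply len_filter_neq; apply in_agents; auto|].
    unfold agents; rewrite length_seq; lia. }
  assert (HN1 : 0 < INR (N - 1)) by (apply lt_0_INR; lia).
  rewrite vnorm_nrm.
  unfold rhs. fold J.
  eapply Rle_trans; [apply (nrm_sum (seq 0 d) J (fun j => aw N d psi sigma tau x i j r)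
                            (fun j => vsub (x j (r - tau)) (x i (r - sigma))))|].
  eapply Rle_trans; [apply (sumR_le_len J _ (/ INR (N - 1) * B))|].
  - intros j Hin. specialize (HJ j Hin).
    unfold aw. set (p := psi _).
    assert (0 < p) by (apply Hpos; apply sqrt_pos).
    assert (p <= 1) by (apply Hle1; apply sqrt_pos).
    assert (Hq : 0 < / INR (N - 1)) by (apply Rinv_0_lt_compat; lra).
    assert (Hn : nrm (seq 0 d) (vsub (x j (r - tau)) (x i (r - sigma))) <= B)
      by (rewrite <- vnorm_nrm; apply Hj; auto).
    assert (0 <= nrm (seq 0 d) (vsub (x j (r - tau)) (x i (r - sigma)))) by apply nrm_nonneg.
    unfold Rdiv. rewrite Rabs_right by (apply Rle_ge, Rmult_le_pos; lra).
    set (q := / INR (N - 1)) in *. cbv beta. set (n := nrm _ _) in *.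
    assert (0 <= q * n * (1 - p)) by (apply Rmult_le_pos; [apply Rmult_le_pos|]; lra).
    assert (0 <= q * (B - n)) by (apply Rmult_le_pos; lra). nra.
  - assert (INR (length J) <= INR (N - 1)) by (apply le_INR; auto).
    rewrite <- Rmult_assoc.
    assert (INR (length J) * / INR (N - 1) <= 1).
    { apply (Rmult_le_reg_r (INR (N - 1))); auto. rewrite Rmult_assoc, Rinv_l by lra. lra. }
    assert (0 <= INR (length J) * / INR (N - 1)).
    { apply Rmult_le_pos; [apply pos_INR|left; apply Rinv_0_lt_compat; lra]. }
    nra.
Qed.

Lemma sum_derive (l : list nat) (h dh : nat -> R -> R) r :
  (forall k, In k l -> is_derive (h k) r (dh k r)) ->
  is_derive (fun t => sumR (map (fun k => h k t) l)) r (sumR (map (fun k => dh k r) l)).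
Proof.
  induction l as [|a l IH]; intros H; simpl.
  - exact (@is_derive_const R_AbsRing R_NormedModule 0 r).
  - apply (is_derive_plus (h a) (fun t => sumR (map (fun k => h k t) l))).
    + apply H; simpl; auto.
    + apply IH; intros; apply H; simpl; auto.
Qed.

Lemma sum_cont_pt (l : list nat) (h : nat -> R -> R) r :
  (forall k, In k l -> continuity_pt (h k) r) ->
  continuity_pt (fun t => sumR (map (fun k => h k t) l)) r.
Proof.
  induction l as [|a l IH]; intros H; simpl.
  - apply continuity_pt_const; intros ? ?; reflexivity.
  - apply (continuity_pt_plus (h a) (fun t => sumR (map (fun k => h k t) l))).
    + apply H; simpl; auto.
    + apply IH; intros; apply H; simpl; auto.
Qed.

Lemma mvt_vec l (f D : R -> nat -> R) c a L :
  c < a ->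
  (forall r k, c < r < a -> In k l -> is_derive (fun u => f u k) r (D r k)) ->
  (forall r k, c <= r <= a -> In k l -> continuity_pt (fun u => f u k) r) ->
  (forall r, c <= r <= a -> nrm l (D r) <= L) ->
  nrm l (vsub (f a) (f c)) <= (a - c) * L.
Proof.
  intros Hca Hd Hc HL.
  set (u := vsub (f a) (f c)).
  set (g := fun t => sumR (map (fun k => u k * f t k) l)).
  destruct (MVT_gen g c a (fun r => sumR (map (fun k => u k * D r k) l))) as [xi [Hxi Heq]].
  - intros r Hr. rewrite Rmin_left, Rmax_right in Hr by lra.
    apply (sum_derive l (fun k t => u k * f t k) (fun k r => u k * D r k)).
    intros k Hk. apply is_derive_scal. apply Hd; auto.
  - intros r Hr. rewrite Rmin_left, Rmax_right in Hr by lra.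
    apply (sum_cont_pt l (fun k t => u k * f t k)).
    intros k Hk. apply continuity_pt_mult; [apply continuity_pt_const; intros ? ?; reflexivity|].
    apply Hc; auto.
  - rewrite Rmin_left, Rmax_right in Hxi by lra.
    assert (Hgu : g a - g c = nrm l u * nrm l u).
    { rewrite nrm_sq. unfold g, sq. rewrite <- (Rplus_0_r (sumR _)) at 1.
      replace 0 with (-1 * sumR (map (fun k => u k * f c k) l) + sumR (map (fun k => u k * f c k) l)) at 1 by ring.
      rewrite <- sumR_scal.
      rewrite <- Rplus_assoc, <- sumR_plus.
      assert (E : sumR (map (fun k => u k * f a k + -1 * (u k * f c k)) l) = sumR (map (fun k => u k ^ 2) l)).
      { apply sumR_ext; intros; unfold u, vsub; ring. }
      rewrite E. ring. }
    assert (Hdot : sumR (map (fun k => u k * D xi k) l) <= nrm l u * L).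
    { eapply Rle_trans; [apply (CS l u (D xi))|].
      apply Rmult_le_compat_l; [apply nrm_nonneg|]. apply HL; lra. }
    assert (0 <= nrm l u) by apply nrm_nonneg.
    assert (0 <= L) by (eapply Rle_trans; [apply (nrm_nonneg l (D c))|apply HL; lra]).
    assert (Hm : nrm l u * nrm l u <= (a - c) * (nrm l u * L)).
    { rewrite <- Hgu, Heq. rewrite Rmult_comm. apply Rmult_le_compat_l; lra. }
    destruct (Req_dec (nrm l u) 0) as [Z|Z].
    + fold u. rewrite Z. apply Rmult_le_pos; lra.
    + fold u. apply (Rmult_le_reg_l (nrm l u)); [lra|]. nra.
Qed.

Lemma c_plus (f g : R -> R) t : continuous f t -> continuous g t -> continuous (fun u => f u + g u) t.
Proof. intros; apply (continuous_plus f g t); auto. Qed.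

Lemma c_mult (f g : R -> R) t : continuous f t -> continuous g t -> continuous (fun u => f u * g u) t.
Proof. intros; apply (continuous_mult f g t); auto. Qed.

Lemma c_const (c t : R) : continuous (fun _ : R => c) t.
Proof. apply continuous_const. Qed.

Lemma c_id t : continuous (fun u : R => u) t.
Proof. apply continuous_id. Qed.

Lemma c_ext (f g : R -> R) t : (forall u, f u = g u) -> continuous f t -> continuous g t.
Proof. intros H; apply (continuous_ext f g t); auto. Qed.

Lemma c_minus (f g : R -> R) t : continuous f t -> continuous g t -> continuous (fun u => f u - g u) t.
Proof.
  intros Hf Hg. apply (c_ext (fun u => f u + (-1) * g u)); [intros; ring|].
  apply c_plus; auto. apply c_mult; auto. apply c_const.
Qed.

Lemma c_comp (f g : R -> R) t : continuous f t -> continuous g (f t) -> continuous (fun u => g (f u)) t.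
Proof. intros; apply (continuous_comp f g t); auto. Qed.

Lemma c_sum (l : list nat) (h : nat -> R -> R) t :
  (forall k, In k l -> continuous (h k) t) -> continuous (fun u => sumR (map (fun k => h k u) l)) t.
Proof.
  induction l as [|a l IH]; intros H; simpl.
  - apply c_const.
  - apply (c_plus (h a) (fun u => sumR (map (fun k => h k u) l))).
    + apply H; simpl; auto.
    + apply IH; intros; apply H; simpl; auto.
Qed.

Lemma Rmax_abs a b : Rmax a b = (a + b + Rabs (a - b)) / 2.
Proof. unfold Rmax; destruct Rle_dec; [rewrite Rabs_left1 | rewrite Rabs_right]; lra. Qed.

Lemma c_max (f g : R -> R) t : continuous f t -> continuous g t -> continuous (fun u => Rmax (f u) (g u)) t.
Proof.
  intros Hf Hg. apply (c_ext (fun u => (f u + g u + Rabs (f u - g u)) * / 2)).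
  { intros; rewrite Rmax_abs; reflexivity. }
  apply c_mult; [|apply c_const]. apply c_plus; [apply c_plus; auto|].
  apply (continuous_Rabs_comp (fun u => f u - g u)). apply c_minus; auto.
Qed.

Lemma c_maxl (l : list nat) (h : nat -> R -> R) t :
  (forall k, In k l -> continuous (h k) t) -> continuous (fun u => maxl (map (fun k => h k u) l)) t.
Proof.
  induction l as [|a l IH]; intros H; simpl.
  - apply c_const.
  - apply (c_max (h a) (fun u => maxl (map (fun k => h k u) l))).
    + apply H; simpl; auto.
    + apply IH; intros; apply H; simpl; auto.
Qed.

Lemma c_vnorm d (v : R -> nat -> R) t :
  (forall k, (k < d)%nat -> continuous (fun u => v u k) t) -> continuous (fun u => vnorm d (v u)) t.
Proof.
  intros H. unfold vnorm. apply (continuous_sqrt_comp (fun u => sumR (map (fun k => v u k ^ 2) (seq 0 d)))).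
  apply (c_sum _ (fun k u => v u k ^ 2)). intros k Hk. apply in_seq in Hk.
  apply (c_ext (fun u => v u k * v u k)); [intros; ring|].
  apply c_mult; apply H; lia.
Qed.

Lemma filterlim_within_always (g : R -> R) (F : (R -> Prop) -> Prop) (D : R -> Prop) l :
  filterlim g F (locally l) -> (forall u, D (g u)) -> Filter F ->
  filterlim g F (within D (locally l)).
Proof.
  intros H HD HF P HP. unfold within in HP. specialize (H _ HP).
  unfold filtermap in *. revert H. apply filter_imp. intros u Hu. apply Hu, HD.
Qed.

Lemma within_loc (f : R -> R) (D : R -> Prop) t l :
  filterlim f (within D (locally t)) (locally l) -> locally t D ->
  filterlim f (locally t) (locally l).
Proof.
  intros H HD P HP. specialize (H _ HP). unfold within, filtermap in *.
  generalize (filter_and _ _ HD H). apply filter_imp. intros u [Hu Hu']. apply Hu', Hu.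
Qed.

Lemma locally_ge a t : a < t -> locally t (fun u => a <= u).
Proof.
  intros H. apply (filter_imp (fun u => a < u)); [intros; lra|].
  apply (open_gt a). exact H.
Qed.

Lemma c_psi psi (g : R -> R) t : psi_ok psi -> (forall u, 0 <= g u) -> continuous g t ->
  continuous (fun u => psi (g u)) t.
Proof.
  intros [Hc _] Hg Hgt. unfold continuous.
  eapply filterlim_comp; [apply (filterlim_within_always g (locally t) (fun u => 0 <= u));
    [exact Hgt | exact Hg | apply locally_filter]|].
  apply Hc, Hg.
Qed.

Definition xt (tau : R) (x : config) : config := fun i u k => x i (Rmax u (-tau)) k.

Lemma xt_cont N d psi sigma tau x i k t :
  is_solution N d psi sigma tau x -> (1 <= i <= N)%nat -> (k < d)%nat ->
  continuous (fun u => xt tau x i u k) t.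
Proof.
  intros [Hs _] Hi Hk. unfold xt, continuous.
  apply (filterlim_comp R R R (fun u => Rmax u (-tau)) (fun v => x i v k) (locally t)
    (within (fun u => -tau <= u) (locally (Rmax t (-tau))))).
  - apply (filterlim_within_always (fun u => Rmax u (-tau)) _ (fun u => -tau <= u)).
    + apply (c_max (fun u => u) (fun _ => -tau)); [apply c_id|apply c_const].
    + intros; apply Rmax_r.
    + apply locally_filter.
  - apply Hs; auto. apply Rmax_r.
Qed.

Lemma x_cont_pt N d psi sigma tau x i k t :
  is_solution N d psi sigma tau x -> (1 <= i <= N)%nat -> (k < d)%nat -> -tau < t ->
  continuity_pt (fun u => x i u k) t.
Proof.
  intros Hsol Hi Hk Ht. apply continuity_pt_filterlim.
  apply (within_loc _ (fun u => -tau <= u)); [|apply locally_ge; auto].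
  apply (proj1 Hsol); auto; lra.
Qed.

Lemma rhs_xt N d psi sigma tau x i r k :
  0 <= r -> 0 <= sigma -> sigma <= tau ->
  rhs N d psi sigma tau (xt tau x) i r k = rhs N d psi sigma tau x i r k.
Proof.
  intros Hr Hs Hst. unfold rhs, aw, xt.
  rewrite (Rmax_left (r - tau) (-tau)) by lra.
  rewrite (Rmax_left (r - sigma) (-tau)) by lra.
  reflexivity.
Qed.

Definition Wf N d psi sigma tau x r :=
  maxl (map (fun i => vnorm d (fun k => rhs N d psi sigma tau (xt tau x) i r k)) (agents N)).

Lemma rhs_xt_cont N d psi sigma tau x i k t :
  psi_ok psi -> is_solution N d psi sigma tau x -> (1 <= i <= N)%nat -> (k < d)%nat ->
  continuous (fun u => rhs N d psi sigma tau (xt tau x) i u k) t.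
Proof.
  intros Hpsi Hsol Hi Hk. unfold rhs.
  apply (c_sum _ (fun j u => aw N d psi sigma tau (xt tau x) i j u *
            (xt tau x j (u - tau) k - xt tau x i (u - sigma) k))).
  intros j Hj. apply filter_In in Hj. destruct Hj as [Hj _]. apply in_agents in Hj.
  assert (Hc : forall m v (c : R), (1 <= m <= N)%nat -> (v < d)%nat ->
            continuous (fun u => xt tau x m (u - c) v) t).
  { intros m v c Hm Hv. apply (c_comp (fun u => u - c) (fun w => xt tau x m w v)).
    - apply c_minus; [apply c_id|apply c_const].
    - eapply xt_cont; eauto. }
  apply c_mult.
  - unfold aw. apply (c_mult (fun u => psi (vnorm d (vsub (xt tau x i (u - sigma)) (xt tau x j (u - tau)))))
                             (fun _ => / INR (N - 1))); [|apply c_const].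
    apply (c_psi psi (fun u => vnorm d (vsub (xt tau x i (u - sigma)) (xt tau x j (u - tau))))); auto.
    + intros; apply sqrt_pos.
    + apply (c_vnorm d (fun u => vsub (xt tau x i (u - sigma)) (xt tau x j (u - tau)))).
      intros v Hv. unfold vsub. apply (c_minus (fun u => xt tau x i (u - sigma) v) (fun u => xt tau x j (u - tau) v)); auto.
  - apply (c_minus (fun u => xt tau x j (u - tau) k) (fun u => xt tau x i (u - sigma) k)); auto.
Qed.

Lemma W_cont N d psi sigma tau x t :
  psi_ok psi -> is_solution N d psi sigma tau x ->
  continuous (Wf N d psi sigma tau x) t.
Proof.
  intros Hpsi Hsol. unfold Wf.
  apply (c_maxl _ (fun i u => vnorm d (fun k => rhs N d psi sigma tau (xt tau x) i u k))).
  intros i Hi. apply in_agents in Hi.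
  apply (c_vnorm d (fun u k => rhs N d psi sigma tau (xt tau x) i u k)).
  intros k Hk. eapply rhs_xt_cont; eauto.
Qed.

Lemma V_W N d psi sigma tau x r :
  is_solution N d psi sigma tau x -> 0 < r -> 0 <= sigma -> sigma <= tau ->
  maxl (map (fun i => vnorm d (vel x i r)) (agents N)) = Wf N d psi sigma tau x r.
Proof.
  intros Hsol Hr Hs Hst. unfold Wf. f_equal. apply map_ext_in. intros i Hi. apply in_agents in Hi.
  rewrite !vnorm_nrm. apply nrm_ext. intros k Hk. apply in_seq in Hk.
  rewrite rhs_xt by lra. unfold vel. apply is_derive_unique. apply (proj2 Hsol); auto; lia.
Qed.

Lemma bound_all (P : nat -> R -> Prop) n :
  (forall i M M', M <= M' -> P i M -> P i M') ->
  (forall i, (1 <= i <= n)%nat -> exists M, P i M) ->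
  exists M, forall i, (1 <= i <= n)%nat -> P i M.
Proof.
  intros Hmono. induction n as [|n IH]; intros H.
  - exists 0. intros; lia.
  - destruct IH as [M1 HM1]. { intros i Hi; apply H; lia. }
    destruct (H (S n)) as [M2 HM2]; [lia|].
    exists (Rmax M1 M2). intros i Hi.
    destruct (Nat.eq_dec i (S n)) as [->|Hne].
    + eapply Hmono; [apply Rmax_r|]; auto.
    + eapply Hmono; [apply Rmax_l|]; apply HM1; lia.
Qed.

Lemma Delta_prop N d psi sigma tau x :
  is_solution N d psi sigma tau x -> 0 <= tau -> (1 <= N)%nat ->
  0 <= Delta0 N d tau x /\
  (forall i j s t, (1 <= i <= N)%nat -> (1 <= j <= N)%nat -> -tau <= s <= 0 -> -tau <= t <= 0 ->
     vnorm d (vsub (x i s) (x j t)) <= Delta0 N d tau x).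
Proof.
  intros Hsol Htau HN.
  destruct (bound_all (fun i M => forall s, -tau <= s <= 0 -> vnorm d (x i s) <= M) N) as [M HM].
  { intros i M M' HMM H s Hs. specialize (H s Hs). lra. }
  { intros i Hi.
    destruct (continuity_ab_maj (fun s => vnorm d (xt tau x i s)) (-tau) 0) as [m [Hm _]]; [lra| |].
    - intros c Hc. apply continuity_pt_filterlim.
      apply (c_vnorm d (fun u => xt tau x i u)). intros k Hk. eapply xt_cont; eauto.
    - exists (vnorm d (xt tau x i m)). intros s Hs. specialize (Hm s Hs).
      unfold xt at 1 in Hm. rewrite Rmax_left in Hm by lra. exact Hm. }
  set (E := fun r => exists i j s t,
    (1 <= i <= N)%nat /\ (1 <= j <= N)%nat /\
    -tau <= s <= 0 /\ -tau <= t <= 0 /\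
    r = vnorm d (vsub (x i s) (x j t))).
  assert (HE : forall r, E r -> r <= 2 * M).
  { intros r [i [j [s [t [Hi [Hj [Hs [Ht ->]]]]]]]].
    eapply Rle_trans; [rewrite !vnorm_nrm; apply vsub_le|]. rewrite <- !vnorm_nrm.
    assert (vnorm d (x i s) <= M) by auto. assert (vnorm d (x j t) <= M) by auto. lra. }
  assert (HE0 : E (vnorm d (vsub (x 1%nat 0) (x 1%nat 0)))).
  { exists 1%nat, 1%nat, 0, 0. repeat split; try lia; lra. }
  assert (H00 : vnorm d (vsub (x 1%nat 0) (x 1%nat 0)) = 0).
  { rewrite vnorm_nrm. apply nrm_zero. intros; unfold vsub; ring. }
  destruct (Lub_Rbar_correct E) as [Hub Hlub].
  unfold Delta0. fold E.
  destruct (Lub_Rbar E) as [l| |] eqn:El.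
  - simpl. split.
    + specialize (Hub _ HE0). simpl in Hub. lra.
    + intros i j s t Hi Hj Hs Ht. apply (Hub (vnorm d (vsub (x i s) (x j t)))).
      exists i, j, s, t. repeat split; auto; try lra; try lia.
  - exfalso. assert (Hb : Rbar_le p_infty (2 * M)). { apply Hlub. intros r Hr. apply HE; auto. }
    simpl in Hb. exact Hb.
  - exfalso. specialize (Hub _ HE0). simpl in Hub. exact Hub.
Qed.

Lemma pos_bound N d psi sigma tau x D :
  (2 <= N)%nat -> psi_ok psi -> is_solution N d psi sigma tau x ->
  0 < sigma -> sigma <= tau -> 0 <= D ->
  (forall i j s t, (1 <= i <= N)%nat -> (1 <= j <= N)%nat -> -tau <= s <= 0 -> -tau <= t <= 0 ->
     vnorm d (vsub (x i s) (x j t)) <= D) ->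
  forall k i j a b, (1 <= i <= N)%nat -> (1 <= j <= N)%nat ->
    -tau <= a <= INR k * sigma -> -tau <= b <= INR k * sigma ->
    vnorm d (vsub (x i a) (x j b)) <= (1 + 2 * sigma) ^ k * D.
Proof.
  intros HN Hpsi Hsol Hs Hst HD Hbase k. induction k as [|k IH].
  - intros i j a b Hi Hj Ha Hb. simpl in *. rewrite Rmult_0_l in *. rewrite Rmult_1_l. auto.
  - set (c := INR k * sigma). set (M := (1 + 2 * sigma) ^ k * D).
    assert (Hc0 : 0 <= c) by (apply Rmult_le_pos; [apply pos_INR|lra]).
    assert (HM : 0 <= M) by (apply Rmult_le_pos; [apply pow_le; lra|lra]).
    assert (HSk : INR (S k) * sigma = c + sigma) by (unfold c; rewrite S_INR; ring).
    rewrite HSk.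
    assert (Hstep : forall i a', (1 <= i <= N)%nat -> c <= a' <= c + sigma ->
              vnorm d (vsub (x i a') (x i c)) <= sigma * M).
    { intros i a' Hi Ha'. destruct (Req_dec a' c) as [->|Hne].
      - rewrite vnorm_nrm, nrm_zero; [apply Rmult_le_pos; lra|]. intros; unfold vsub; ring.
      - rewrite vnorm_nrm. eapply Rle_trans.
        + apply (mvt_vec (seq 0 d) (x i) (fun r k => rhs N d psi sigma tau x i r k) c a' M).
          * lra.
          * intros r v Hr Hv. apply in_seq in Hv. apply (proj2 Hsol); auto; try lia; lra.
          * intros r v Hr Hv. apply in_seq in Hv. eapply x_cont_pt; eauto; lia || lra.
          * intros r Hr. rewrite <- vnorm_nrm. apply speed; auto.
            intros j Hj. apply IH; auto; try lia; unfold c in *; split; lra.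
        + apply Rmult_le_compat_r; lra. }
    assert (Hsym : forall i j a b, vnorm d (vsub (x i a) (x j b)) = vnorm d (vsub (x j b) (x i a))).
    { intros; rewrite !vnorm_nrm; apply vsub_sym. }
    assert (Htri : forall u v w, vnorm d (vsub u w) <= vnorm d (vsub u v) + vnorm d (vsub v w)).
    { intros; rewrite !vnorm_nrm; apply vsub_tri. }
    intros i j a b Hi Hj Ha Hb.
    replace ((1 + 2 * sigma) ^ S k * D) with ((1 + 2 * sigma) * M) by (unfold M; simpl; ring).
    destruct (Rle_dec a c) as [Hac|Hac]; destruct (Rle_dec b c) as [Hbc|Hbc].
    + assert (vnorm d (vsub (x i a) (x j b)) <= M) by (apply IH; auto; unfold c in *; try split; lra). nra.
    + eapply Rle_trans; [apply (Htri _ (x j c))|].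
      assert (vnorm d (vsub (x i a) (x j c)) <= M) by (apply IH; auto; unfold c in *; try split; lra).
      rewrite (Hsym j j c b). assert (vnorm d (vsub (x j b) (x j c)) <= sigma * M) by (apply Hstep; auto; unfold c in *; try split; lra). nra.
    + eapply Rle_trans; [apply (Htri _ (x i c))|].
      assert (vnorm d (vsub (x i c) (x j b)) <= M) by (apply IH; auto; unfold c in *; try split; lra).
      assert (vnorm d (vsub (x i a) (x i c)) <= sigma * M) by (apply Hstep; auto; unfold c in *; try split; lra). nra.
    + eapply Rle_trans; [apply (Htri _ (x i c))|].
      eapply Rle_trans; [apply Rplus_le_compat_l, (Htri _ (x j c))|].
      assert (vnorm d (vsub (x i c) (x j c)) <= M) by (apply IH; auto; unfold c in *; try split; lra).
      assert (vnorm d (vsub (x i a) (x i c)) <= sigma * M) by (apply Hstep; auto; unfold c in *; try split; lra).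
      rewrite (Hsym j j c b). assert (vnorm d (vsub (x j b) (x j c)) <= sigma * M) by (apply Hstep; auto; unfold c in *; try split; lra).
      nra.
Qed.

Lemma Zsig_ge sigma k : 0 <= sigma -> (1 + 2 * sigma) ^ k <= Zsig sigma k.
Proof.
  intros Hs.
  assert (H : forall k, 0 <= fst (Zpair sigma k) <= snd (Zpair sigma k) /\ (1 + 2 * sigma) ^ k <= fst (Zpair sigma k)).
  { induction k0 as [|k0 IH]; simpl; [lra|].
    destruct (Zpair sigma k0) as [z s]. simpl in *. destruct IH as [[H1 H2] H3].
    split; [split|]; nra. }
  apply H.
Qed.

Lemma maxl_le (l : list R) M : 0 <= M -> (forall y, In y l -> y <= M) -> maxl l <= M.
Proof.
  induction l as [|a l IH]; simpl; intros HM H; [lra|].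
  apply Rmax_lub; auto.
Qed.

Lemma int_exp t B : RInt (fun s => exp (- (t - s)) * ((t - s) * B)) 0 t = B * (1 - (1 + t) * exp (- t)).
Proof.
  apply is_RInt_unique.
  replace (B * (1 - (1 + t) * exp (- t))) with
    (minus (B * ((1 + t - t) * exp (- (t - t)))) (B * ((1 + t - 0) * exp (- (t - 0))))).
  - apply (is_RInt_derive (fun s => B * ((1 + t - s) * exp (- (t - s))))).
    + intros s _. auto_derive; auto. replace (t + - s) with (t - s) by ring. ring.
    + intros s _. apply (c_mult (fun s => exp (- (t - s))) (fun s => (t - s) * B)).
      * apply (c_comp (fun s => - (t - s)) exp).
        -- apply (c_ext (fun s => -1 * (t - s))); [intros; ring|].
           apply c_mult; [apply c_const|apply c_minus; [apply c_const|apply c_id]].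
        -- apply continuous_exp.
      * apply c_mult; [apply c_minus; [apply c_const|apply c_id]|apply c_const].
  - unfold minus, plus, opp; simpl. replace (- (t - t)) with 0 by ring. rewrite exp_0.
    replace (- (t - 0)) with (- t) by ring. ring.
Qed.

Lemma ct_bounds t T : 0 <= t <= T ->
  0 <= 1 - (1 + t) * exp (- t) /\ 1 - (1 + t) * exp (- t) <= 1 - (1 + T) * exp (- T).
Proof.
  intros Ht. split.
  - assert (H1 := exp_ineq1_le t). assert (H2 : exp (- t) * exp t = 1) by (rewrite <- exp_plus; replace (-t + t) with 0 by ring; apply exp_0).
    assert (0 < exp (- t)) by apply exp_pos. nra.
  - assert (H1 := exp_ineq1_le (T - t)).
    assert (H2 : exp (- t) = exp (T - t) * exp (- T)) by (rewrite <- exp_plus; f_equal; ring).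
    assert (0 < exp (- T)) by apply exp_pos.
    assert ((1 + T) <= (1 + t) * exp (T - t)) by nra.
    rewrite H2. nra.
Qed.

Lemma diam_le N d x t M : 0 <= M ->
  (forall i j, (1 <= i <= N)%nat -> (1 <= j <= N)%nat -> vnorm d (vsub (x i t) (x j t)) <= M) ->
  diam N d x t <= M.
Proof.
  intros HM H. unfold diam. apply maxl_le; auto. intros y Hy. apply in_map_iff in Hy.
  destruct Hy as [i [<- Hi]]. apply maxl_le; auto. intros z Hz. apply in_map_iff in Hz.
  destruct Hz as [j [<- Hj]]. apply in_agents in Hi, Hj. auto.
Qed.

Theorem lemma3p7 (N d : nat) (sigma tau beta : R) (psi : R -> R)
  (x : config) (K : nat) :
  (2 <= N)%nat -> (1 <= d)%nat ->
  0 <= sigma -> sigma <= tau ->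
  psi_ok psi ->
  is_solution N d psi sigma tau x ->
  0 < beta ->
  (* K is the smallest integer with K*sigma >= 2 tau *)
  INR K * sigma >= 2 * tau ->
  (forall k : nat, INR k * sigma >= 2 * tau -> (K <= k)%nat) ->
  forall t, 0 <= t <= 2 * tau ->
    Ffun N d beta tau x t <=
      (Zsig sigma K + Zsig sigma (K - 1) * beta * (1 - (1 + 2 * tau) * exp (- (2 * tau))))
      * Delta0 N d tau x.
Proof.
  intros HN Hd Hs Hst Hpsi Hsol Hb HK Hmin t Ht.
  assert (Htau : 0 <= tau) by lra.
  destruct (Delta_prop N d psi sigma tau x Hsol Htau) as [HD0 Hbase]; [lia|].
  set (D := Delta0 N d tau x) in *.
  unfold Ffun. rewrite Rmax_left by lra.
  destruct (Req_dec tau 0) as [T0|T0].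
  - assert (t = 0) by lra. subst t.
    assert (K = 0%nat) by (assert (K <= 0)%nat by (apply Hmin; simpl; lra); lia). subst K.
    rewrite RInt_point. unfold zero; simpl.
    rewrite T0. replace (- (2 * 0)) with 0 by ring. rewrite exp_0. simpl Zsig.
    assert (diam N d x 0 <= D).
    { apply diam_le; auto. intros i j Hi Hj. apply Hbase; auto; lra. }
    unfold Zsig; simpl. nra.
  - assert (Htp : 0 < tau) by lra.
    assert (Hsp : 0 < sigma).
    { destruct (Req_dec sigma 0) as [S0|S0]; [|lra]. rewrite S0 in HK. lra. }
    destruct K as [|K'].
    { simpl in HK. lra. }
    replace (S K' - 1)%nat with K' by lia.
    assert (HSK : INR (S K') * sigma = INR K' * sigma + sigma) by (rewrite S_INR; ring).
    assert (P := pos_bound N d psi sigma tau x D HN Hpsi Hsol Hsp Hst HD0 Hbase).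
    set (B := (1 + 2 * sigma) ^ K' * D).
    assert (HB0 : 0 <= B) by (apply Rmult_le_pos; [apply pow_le|]; lra).
    assert (Hdiam : diam N d x t <= (1 + 2 * sigma) ^ S K' * D).
    { apply diam_le. { apply Rmult_le_pos; [apply pow_le|]; lra. }
      intros i j Hi Hj. apply P; auto; lra. }
    assert (HW : forall r, 0 <= r <= 2 * tau -> Wf N d psi sigma tau x r <= B).
    { intros r Hr. unfold Wf. apply maxl_le; auto. intros y Hy. apply in_map_iff in Hy.
      destruct Hy as [i [<- Hi]]. apply in_agents in Hi.
      rewrite vnorm_nrm, (nrm_ext _ _ (fun k => rhs N d psi sigma tau x i r k))
        by (intros; apply rhs_xt; lra).
      rewrite <- vnorm_nrm. apply speed; auto.
      intros j Hj. apply P; auto; split; lra. }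
    assert (HWc : forall z, continuous (Wf N d psi sigma tau x) z) by (intros; eapply W_cont; eauto).
    assert (HWi : forall a b, ex_RInt (Wf N d psi sigma tau x) a b) by (intros; apply (@ex_RInt_continuous R_CompleteNormedModule); auto).
    assert (Heq : RInt (fun s => exp (- (t - s)) *
              RInt (fun r => maxl (map (fun i => vnorm d (vel x i r)) (agents N))) s t) 0 t =
                  RInt (fun s => exp (- (t - s)) * RInt (Wf N d psi sigma tau x) s t) 0 t).
    { apply RInt_ext. intros s Hs'. rewrite Rmin_left, Rmax_right in Hs' by lra.
      f_equal. apply RInt_ext. intros r Hr. rewrite Rmin_left, Rmax_right in Hr by lra.
      apply V_W; auto; lra. }
    assert (Hexpc : forall z, continuous (fun s => exp (- (t - s))) z).
    { intros z. apply continuous_exp_comp.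
      apply (c_ext (fun s => -1 * (t - s))); [intros; ring|].
      apply c_mult; [apply c_const|apply c_minus; [apply c_const|apply c_id]]. }
    assert (Hle : RInt (fun s => exp (- (t - s)) * RInt (Wf N d psi sigma tau x) s t) 0 t <=
                  RInt (fun s => exp (- (t - s)) * ((t - s) * B)) 0 t).
    { apply RInt_le; [lra| | |].
      - apply (@ex_RInt_continuous R_CompleteNormedModule). intros z _.
        apply (c_mult (fun s => exp (- (t - s))) (fun s => RInt (Wf N d psi sigma tau x) s t)); auto.
        apply (continuous_RInt_2 (Wf N d psi sigma tau x) z t (fun s => RInt (Wf N d psi sigma tau x) s t)).
        apply filter_forall. intros; apply (@RInt_correct R_CompleteNormedModule); auto.
      - apply (@ex_RInt_continuous R_CompleteNormedModule). intros z _.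
        apply (c_mult (fun s => exp (- (t - s))) (fun s => (t - s) * B)); auto.
        apply c_mult; [apply c_minus; [apply c_const|apply c_id]|apply c_const].
      - intros s Hs'. apply Rmult_le_compat_l; [left; apply exp_pos|].
        replace ((t - s) * B) with (RInt (fun _ => B) s t).
        + apply RInt_le; auto; [lra|apply ex_RInt_const|].
          intros r Hr. apply HW; lra.
        + rewrite RInt_const. reflexivity. }
    rewrite int_exp in Hle. rewrite Heq.
    destruct (ct_bounds t (2 * tau)) as [C1 C2]; [lra|].
    assert (Z1 := Zsig_ge sigma (S K') Hs). assert (Z2 := Zsig_ge sigma K' Hs).
    set (ct := 1 - (1 + t) * exp (- t)) in *.
    set (c := 1 - (1 + 2 * tau) * exp (- (2 * tau))) in *.
    assert (B <= Zsig sigma K' * D) by (unfold B; apply Rmult_le_compat_r; auto).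
    assert ((1 + 2 * sigma) ^ S K' * D <= Zsig sigma (S K') * D) by (apply Rmult_le_compat_r; auto).
    assert (B * ct <= Zsig sigma K' * D * c).
    { apply Rmult_le_compat; auto. }
    nra.
Qed.
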